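(* Let $n \ge 1$ be an integer and let $R$ be a $2n$-adically closed ring. Then there are no polygons in $R$.
   Context: All rings are commutative with $1$. For $k \in \mathbb{N}=\{1,2,\dots\}$, a ring $R$ is called $k$-adically closed if every monic polynomial of degree $k$ with coefficients in $R$ has a root in $R$ (a $2$-adically closed ring is also called quadratically closed). A polygon in a ring $R$ consists of: an integer $m>2$, irreducible closed subsets $C_0,\dots,C_{m-1}$ of $\mathrm{Spec}(R)$, and irreducible closed subsets $D_0,\dots,D_{m-1}$ of $\mathrm{Spec}(R)$, such that for all $i,j\in\{0,\dots,m-1\}$ we have $D_j\subset C_i$ if and only if $i=j$ or $i\equiv j+1 \pmod m$. (Irreducible closed subsets are nonempty.) *)

(* Defs.v *)
From HB Require Import structures.
From mathcomp Require Import all_boot all_order all_algebra.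
Set Implicit Arguments. Unset Strict Implicit. Unset Printing Implicit Defensive.
Import GRing.Theory.
Local Open Scope ring_scope.

Definition adically_closed (R : comNzRingType) (k : nat) : Prop :=
  forall p : {poly R}, p \is monic -> size p = k.+1 -> exists x : R, root p x.

Definition is_ideal (R : comNzRingType) (I : R -> Prop) : Prop :=
  [/\ I 0, (forall x y, I x -> I y -> I (x + y)) & (forall a x, I x -> I (a * x))].

Definition is_prime_ideal (R : comNzRingType) (P : R -> Prop) : Prop :=
  [/\ is_ideal P, ~ P 1 & (forall a b, P (a * b) -> P a \/ P b)].

Definition spec_subset (R : comNzRingType) := (R -> Prop) -> Prop.

Definition spec_sub (R : comNzRingType) (A B : spec_subset R) : Prop :=
  forall P, A P -> B P.

Definition zariski_closed (R : comNzRingType) (Z : spec_subset R) : Prop :=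
  exists S : R -> Prop, forall P : R -> Prop,
    Z P <-> (is_prime_ideal P /\ forall x, S x -> P x).

Definition irreducible_closed (R : comNzRingType) (Z : spec_subset R) : Prop :=
  [/\ zariski_closed Z, (exists P, Z P) &
      (forall Z1 Z2 : spec_subset R, zariski_closed Z1 -> zariski_closed Z2 ->
         spec_sub Z (fun P => Z1 P \/ Z2 P) -> spec_sub Z Z1 \/ spec_sub Z Z2)].

Definition polygon (R : comNzRingType) : Prop :=
  exists (m : nat) (hm : (2 < m)%N) (C D : 'I_m -> spec_subset R),
    [/\ (forall i, irreducible_closed (C i)),
        (forall j, irreducible_closed (D j)) &
        (forall i j : 'I_m,
           spec_sub (D j) (C i) <-> (i = j \/ (i : nat) = ((j : nat) + 1) %% m)%N)].

(* Main.v *)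
Require Import Defs.
From HB Require Import structures.
From mathcomp Require Import all_boot all_order all_algebra.
From mathcomp Require Import zify ring.
From Stdlib Require Import Classical.
Set Implicit Arguments. Unset Strict Implicit. Unset Printing Implicit Defensive.
Import GRing.Theory.
Local Open Scope ring_scope.
Lemma Pnot1 (R : comNzRingType) (P : R -> Prop) : is_prime_ideal P -> ~ P 1.
Proof. by case. Qed.
Lemma Pprod (R : comNzRingType) (P : R -> Prop) a b :
  is_prime_ideal P -> P (a * b) -> P a \/ P b.
Proof. by case=> _ _ H; apply: H. Qed.
Lemma Pexp (R : comNzRingType) (P : R -> Prop) y k :
  is_prime_ideal P -> P (y ^+ k) -> P y.
Proof.
move=> hP; elim: k => [|k IH]; first by rewrite expr0 => /(Pnot1 hP).
by rewrite exprS => /(Pprod hP) [].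
Qed.

Lemma root_mod (R : comNzRingType) n : (1 <= n)%N -> adically_closed R (2 * n) ->
  forall b s : R, exists r : R, forall P, is_prime_ideal P -> P ((r - b) * r + s).
Proof.
move=> hn hR b s.
set q : {poly R} := ('X - b%:P) * 'X + s%:P.
have sq : size q = 3%N.
  by rewrite /q size_MXaddC size_XsubC (negbTE (monic_neq0 (monicXsubC b))).
have mq : q \is monic.
  rewrite monicE /q lead_coefDl ?lead_coefMX ?lead_coefXsubC //.
  rewrite size_polyC size_mulX ?size_XsubC ?(monic_neq0 (monicXsubC b)) //.
  by case: (s == 0).
have szn : forall k, size (q ^+ k) = (2 * k).+1.
  elim=> [|k IH]; first by rewrite expr0 size_poly1.
  rewrite exprS size_monicM // ?IH ?sq; last by apply: monic_neq0; apply: monic_exp.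
  by rewrite mulnS.
have [r hr] := hR (q ^+ n) (monic_exp n mq) (szn n).
exists r => P hP.
apply: (@Pexp _ P _ n hP).
move/eqP: hr; rewrite horner_exp /q hornerMXaddC !hornerE => ->.
by case: hP => [[]].
Qed.
Lemma I0 (R : comNzRingType) (P : R -> Prop) : is_ideal P -> P 0.
Proof. by case. Qed.
Lemma IM (R : comNzRingType) (P : R -> Prop) a x : is_ideal P -> P x -> P (a * x).
Proof. by case=> _ _ H; apply: H. Qed.
Lemma IMr (R : comNzRingType) (P : R -> Prop) a x : is_ideal P -> P x -> P (x * a).
Proof. by move=> h hx; rewrite mulrC; apply: IM. Qed.
Lemma ID (R : comNzRingType) (P : R -> Prop) x y : is_ideal P -> P x -> P y -> P (x + y).
Proof. by case=> _ H _; apply: H. Qed.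
Lemma IN (R : comNzRingType) (P : R -> Prop) x : is_ideal P -> P x -> P (- x).
Proof. by move=> h hx; rewrite -mulN1r; exact: IM. Qed.
Lemma IB (R : comNzRingType) (P : R -> Prop) x y : is_ideal P -> P x -> P y -> P (x - y).
Proof. by move=> h hx hy; apply: ID => //; exact: IN. Qed.
Lemma IBl (R : comNzRingType) (P : R -> Prop) x y : is_ideal P -> P (x - y) -> P y -> P x.
Proof. by move=> h h1 h2; have := ID h h1 h2; rewrite subrK. Qed.
Lemma pr_ideal (R : comNzRingType) (P : R -> Prop) : is_prime_ideal P -> is_ideal P.
Proof. by case. Qed.

Definition gen (R : comNzRingType) (Z : spec_subset R) : R -> Prop :=
  fun x => forall P, Z P -> P x.

Lemma closed_prime (R : comNzRingType) (Z : spec_subset R) P :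
  zariski_closed Z -> Z P -> is_prime_ideal P.
Proof. by case=> S HS /HS []. Qed.

Lemma V1_closed (R : comNzRingType) (a : R) :
  zariski_closed (fun P : R -> Prop => is_prime_ideal P /\ P a).
Proof.
exists (fun x => x = a) => P; split=> [[h1 h2]|[h1 h2]]; split => //.
  by move=> x ->.
by apply: h2.
Qed.

Lemma gen_prime (R : comNzRingType) (Z : spec_subset R) :
  irreducible_closed Z -> is_prime_ideal (gen Z).
Proof.
case=> cZ [P0 ZP0] irr; split.
- split.
  + by move=> P ZP; exact: (I0 (pr_ideal (closed_prime cZ ZP))).
  + move=> x y hx hy P ZP; apply: (ID (pr_ideal (closed_prime cZ ZP))); [exact: hx | exact: hy].
  + move=> a x hx P ZP; apply: (IM _ (pr_ideal (closed_prime cZ ZP))); exact: hx.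
- by move=> h; exact: (Pnot1 (closed_prime cZ ZP0) (h _ ZP0)).
- move=> a b hab.
  have hs : spec_sub Z (fun P => (is_prime_ideal P /\ P a) \/ (is_prime_ideal P /\ P b)).
    move=> P ZP; have hP := closed_prime cZ ZP.
    by case: (Pprod hP (hab P ZP)) => h; [left|right]; split.
  case: (irr _ _ (V1_closed a) (V1_closed b) hs) => H.
  + by left=> P ZP; case: (H P ZP).
  + by right=> P ZP; case: (H P ZP).
Qed.

Lemma gen_char (R : comNzRingType) (Z : spec_subset R) :
  irreducible_closed Z -> forall Q, Z Q <-> (is_prime_ideal Q /\ forall x, gen Z x -> Q x).
Proof.
case=> [[S HS] _ _] Q; split.
- move=> ZQ; split; first by case: (HS Q) => /(_ ZQ) [].
  by move=> x hx; apply: hx.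
- case=> hQ hg; apply/HS; split => // x Sx; apply: hg => P /HS [_]; apply; exact: Sx. 
Qed.

Lemma sub_gen (R : comNzRingType) (C D : spec_subset R) :
  irreducible_closed C -> irreducible_closed D ->
  spec_sub D C <-> (forall x, gen C x -> gen D x).
Proof.
move=> hC hD; split.
- by move=> H x hx P DP; exact: hx _ (H _ DP).
- move=> H P DP; apply/(gen_char hC).
  have [hP hg] := (gen_char hD P).1 DP; split => //.
  by move=> x /H; exact: hg.
Qed.

Lemma prod_avoid (R : comNzRingType) (Q : nat -> R -> Prop) (P : R -> Prop) (l : seq nat) :
  is_prime_ideal P -> (forall j, j \in l -> is_ideal (Q j)) ->
  (forall j, j \in l -> exists x, Q j x /\ ~ P x) ->
  exists t, (forall j, j \in l -> Q j t) /\ ~ P t.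
Proof.
move=> hP; elim: l => [|j l IH] hQ hx.
  by exists 1; split => //; exact: Pnot1.
have [x [Qx nPx]] := hx j (mem_head _ _).
have [t [Qt nPt]] : exists t, (forall j, j \in l -> Q j t) /\ ~ P t.
  apply: IH => k hk.
    by apply: hQ; rewrite in_cons hk orbT.
  by apply: hx; rewrite in_cons hk orbT.
exists (x * t); split.
- move=> k; rewrite in_cons => /orP [/eqP -> | hk].
    by apply: IMr => //; apply: hQ; exact: mem_head.
  by apply: IM; [apply: hQ; rewrite in_cons hk orbT | exact: Qt].
- by move=> /(Pprod hP) [].
Qed.

Lemma prime_avoid (R : comNzRingType) (I : R -> Prop) (d : nat -> R -> Prop) (l : seq nat) :
  is_ideal I -> uniq l -> (forall j, j \in l -> is_prime_ideal (d j)) ->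
  (forall j, j \in l -> exists x, I x /\ ~ d j x) ->
  (forall j k, j \in l -> k \in l -> j != k -> exists x, d j x /\ ~ d k x) ->
  exists x, I x /\ forall j, j \in l -> ~ d j x.
Proof.
move=> hI; elim: l => [|j l IH] /= hu hd hx hinc.
  by exists 0; split => //; exact: I0.
have sub : forall k, k \in l -> k \in j :: l by move=> k hk; rewrite in_cons hk orbT.
case/andP: hu => hjl hu.
have [x [Ix hxl]] := IH hu (fun k hk => hd k (sub k hk)) (fun k hk => hx k (sub k hk))
   (fun k k' hk hk' => hinc k k' (sub k hk) (sub k' hk')).
have [z [Iz nz]] := hx j (mem_head _ _).
have hPj := hd j (mem_head _ _).
case: (classic (d j x)) => hdx; last first.
  by exists x; split => // k; rewrite in_cons => /orP [/eqP -> | /hxl].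
have [t [Qt nPt]] : exists t, (forall k, k \in l -> d k t) /\ ~ d j t.
  apply: prod_avoid => // k hk.
    exact: pr_ideal (hd k (sub k hk)).
  apply: hinc => //; first exact: sub.
    exact: mem_head.
  by apply/eqP => e; subst k; rewrite hk in hjl.
exists (x + z * t); split.
  by apply: ID => //; exact: IMr.
move=> k; rewrite in_cons => /orP [/eqP -> | hk] h.
  have : d j (z * t) by rewrite -(addKr x (z * t)) addrC; apply: (IB (pr_ideal hPj)) => //.
  by move/(Pprod hPj) => [].
have hPk := hd k (sub k hk).
apply: (hxl k hk).
have hzt : d k (z * t) by apply: IM (pr_ideal hPk) (Qt k hk).
by have := IB (pr_ideal hPk) h hzt; rewrite addrK.
Qed.
Lemma IDl (R : comNzRingType) (P : R -> Prop) x y : is_ideal P -> P (x + y) -> P y -> P x.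
Proof. by move=> h h1 h2; have := IB h h1 h2; rewrite addrK. Qed.
Lemma IDr (R : comNzRingType) (P : R -> Prop) x y : is_ideal P -> P (x + y) -> P x -> P y.
Proof. by move=> h; rewrite addrC; apply: IDl. Qed.
Lemma IBr (R : comNzRingType) (P : R -> Prop) x y : is_ideal P -> P (x - y) -> P x -> P y.
Proof.
move=> h h1 h2; have -> : y = x - (x - y) by rewrite opprB addrC subrK.
exact: IB.
Qed.
Lemma nsub_ex (R : comNzRingType) (A B : R -> Prop) :
  ~ (forall x, A x -> B x) -> exists x, A x /\ ~ B x.
Proof.
move=> h; apply: NNPP => h'; apply: h => x Ax; apply: NNPP => nB; apply: h'.
by exists x.
Qed.

Theorem mainTheorem1 (R : comNzRingType) (n : nat) (hn : (1 <= n)%N)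
  (hR : adically_closed R (2 * n)) : ~ polygon R.
Proof.
move=> [m [hm [C [D [HC HD Hinc]]]]].
case: m hm C D HC HD Hinc => [//|M] hm C D HC HD Hinc.
have hM : (2 <= M)%N by [].
pose cn k := gen (C (inord k)).
pose dn k := gen (D (inord k)).
have hcp k : is_prime_ideal (cn k) := gen_prime (HC _).
have hdp k : is_prime_ideal (dn k) := gen_prime (HD _).
have hci k : is_ideal (cn k) := pr_ideal (hcp k).
have hdi k : is_ideal (dn k) := pr_ideal (hdp k).
have inc : forall i j, (i <= M)%N -> (j <= M)%N ->
    (forall x, cn i x -> dn j x) <-> (i = j \/ i = (j + 1) %% M.+1)%N.
  move=> i j hi hj.
  have e : (inord i = inord j :> 'I_M.+1) <-> i = j.
    split => [h|->//]; have := congr1 (@nat_of_ord _) h; rewrite !inordK //.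
  have := Hinc (inord i) (inord j); rewrite !inordK //.
  have := sub_gen (HC (inord i)) (HD (inord j)).
  rewrite /cn /dn; tauto.
have inc' : forall i j, (i <= M)%N -> (j <= M)%N ->
    (forall x, cn i x -> dn j x) <-> (i = j \/ i = j.+1 \/ (i = 0 /\ j = M))%N.
  move=> i j hi hj; rewrite inc //.
  have [hjM|hjM] := ltnP j M.
    rewrite addn1 modn_small ?ltnS //; split => h; lia.
  have -> : j = M by lia.
  rewrite addn1 modnn; split => h; lia.
have SUB : forall i j, (i <= M)%N -> (j <= M)%N ->
    (i = j \/ i = j.+1 \/ (i = 0 /\ j = M))%N -> forall x, cn i x -> dn j x.
  by move=> i j hi hj h; apply/(inc' i j hi hj).
have NSUB : forall i j, (i <= M)%N -> (j <= M)%N ->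
    ~ (i = j \/ i = j.+1 \/ (i = 0 /\ j = M))%N -> exists x, cn i x /\ ~ dn j x.
  by move=> i j hi hj h; apply: nsub_ex => H; apply: h; apply/(inc' i j hi hj).
have [a [hac had]] : exists a, (forall i, i \in iota 2 M.-1 -> cn i a) /\ ~ dn 0 a.
  apply: prod_avoid => // j; rewrite mem_iota => hj.
  apply: NSUB; lia.
have [e [hec hed]] : exists e, (forall i, i \in iota 1 M.-1 -> cn i e) /\ ~ dn M e.
  apply: prod_avoid => // j; rewrite mem_iota => hj.
  apply: NSUB; lia.
have [w [hwc hwd]] : exists w, cn 0 w /\ forall j, j \in iota 1 M.-1 -> ~ dn j w.
  apply: prime_avoid => //.
  - exact: iota_uniq.
  - move=> j; rewrite mem_iota => hj; apply: NSUB; lia.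
  - move=> j k; rewrite !mem_iota => hj hk /eqP hjk.
    apply: nsub_ex => H.
    have h1 : forall x, cn j x -> dn k x.
      move=> x /(SUB j j) h; apply: H; apply: h; lia.
    have h2 : forall x, cn j.+1 x -> dn k x.
      move=> x /(SUB j.+1 j) h; apply: H; apply: h; lia.
    move/(inc' j k): h1 => h1; move/(inc' j.+1 k): h2 => h2; lia.
have ha : forall i, (2 <= i <= M)%N -> cn i a.
  by move=> i hi; apply: hac; rewrite mem_iota; lia.
have he : forall i, (1 <= i < M)%N -> cn i e.
  by move=> i hi; apply: hec; rewrite mem_iota; lia.
have hw : forall i, (1 <= i < M)%N -> ~ dn i w.
  by move=> i hi; apply: hwd; rewrite mem_iota; lia.
set b := a + w + e.
have [r hr] := root_mod hn hR b (a * e).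
have hb : forall j, (j <= M)%N -> ~ dn j b.
  move=> j hj hbj.
  have [j0|jpos] := eqVneq j 0%N.
    subst j.
    have e0 : dn 0 e by apply: (SUB 1%N 0%N) => //; [lia|lia|apply: he; lia].
    have w0 : dn 0 w by apply: (SUB 0%N 0%N) => //; lia.
    apply: had; apply: (IDl (hdi 0%N) _ w0); exact: (IDl (hdi 0%N) hbj e0).
  have [jM|jnM] := eqVneq j M.
    subst j.
    have aM : dn M a by apply: (SUB M M) => //; [lia|apply: ha; lia].
    have wM : dn M w by apply: (SUB 0%N M) => //; lia.
    apply: hed; apply: (IDr (hdi M) hbj); exact: ID (hdi M) aM wM.
  have aj : dn j a by apply: (SUB j.+1 j) => //; [lia|lia|apply: ha; lia].
  have ej : dn j e by apply: (SUB j j) => //; [lia|apply: he; lia].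
  apply: (hw j); first lia.
  exact: (IDr (hdi j) (IDl (hdi j) hbj ej) aj).
have hstep : forall i, (1 <= i <= M)%N -> (dn i.-1 r <-> dn i r).
  move=> i hi.
  have hs : cn i (a * e).
    have [i1|i1] := eqVneq i 1%N.
      by subst i; apply: (IM _ (hci _)); apply: he; lia.
    by apply: (IMr _ (hci _)); apply: ha; lia.
  have s1 : forall x, cn i x -> dn i.-1 x by apply: SUB; lia.
  have s2 : forall x, cn i x -> dn i x by apply: SUB; lia.
  have := IDl (hci i) (hr _ (hcp i)) hs.
  case/(Pprod (hcp i)) => h; last by split => _; [apply: s2 | apply: s1].
  have nb : forall k, (k <= M)%N -> (forall x, cn i x -> dn k x) -> ~ dn k r.
    move=> k hk sk hkr; apply: (hb k hk).
    exact: (IBr (hdi k) (sk _ h) hkr).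
  split => hh; [exfalso; apply: (nb i.-1) hh | exfalso; apply: (nb i) hh] => //; lia.
have chain : forall k, (k <= M)%N -> (dn 0 r <-> dn k r).
  elim => [|k IH] hk; first by [].
  have := hstep k.+1; rewrite /= => h.
  have := IH (ltnW hk); have := h ltac:(lia); tauto.
have hc0 := hr _ (hcp 0%N).
have id : (r - b) * r + a * e = (r - a) * (r - e) - w * r by rewrite /b; ring.
rewrite id in hc0.
have wr : cn 0 (w * r) by apply: (IMr _ (hci _)).
have := IBl (hci 0%N) hc0 wr.
have s0 : forall x, cn 0 x -> dn 0 x by apply: SUB; lia.
have sM : forall x, cn 0 x -> dn M x by apply: SUB; lia.
have aM : dn M a by apply: (SUB M M) => //; [lia|apply: ha; lia].
have e0 : dn 0 e by apply: (SUB 1%N 0%N) => //; [lia|lia|apply: he; lia].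
have [c1 c2] := chain M (leqnn M).
case/(Pprod (hcp 0%N)) => h.
- have rM : dn M r := IBl (hdi M) (sM _ h) aM.
  apply: had; exact: IBr (hdi 0%N) (s0 _ h) (c2 rM).
- have r0 : dn 0 r := IBl (hdi 0%N) (s0 _ h) e0.
  apply: hed; exact: IBr (hdi M) (sM _ h) (c1 r0).
Qed.
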